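(* For $i=1,2$ let $X_i$ be a set with a distinguished point $e_i\in X_i$ and let $K_i\colon X_i\times X_i\to\mathbb{R}$ be a kernel with $K_i(x,y)=K_i(y,x)\geq0$ and $K_i(x,x)=0$ that is conditionally strictly negative definite. Let $X=X_1\sqcup X_2/\!\sim$ where $e_1\sim e_2$ (so $X_1,X_2\subseteq X$ with $X_1\cap X_2=\{e_1\}=\{e_2\}$), and define $K\colon X\times X\to\mathbb{R}$ by $K(x,y)=K_1(x,y)$ if $x,y\in X_1$; $K(x,y)=K_1(x,e_1)+K_2(e_2,y)$ if $x\in X_1,y\in X_2$; $K(x,y)=K_2(x,e_2)+K_1(e_1,y)$ if $x\in X_2,y\in X_1$; $K(x,y)=K_2(x,y)$ if $x,y\in X_2$. Then $K$ is well defined, satisfies $K(x,y)=K(y,x)\ge0$, $K(x,x)=0$, and is conditionally strictly negative definite.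
   Context: A kernel $K$ on a set $Y$ is conditionally strictly negative definite if for every finitely supported $\lambda\colon Y\to\mathbb{C}$, $\lambda\neq0$, with $\sum_y\lambda(y)=0$ one has $\sum_{x,y}\lambda(x)\overline{\lambda(y)}K(x,y)<0$. *)

(* Defs.v *)
From HB Require Import structures.
From mathcomp Require Import all_boot all_order all_algebra.
From mathcomp Require Import finmap.
From mathcomp Require Import reals.
From mathcomp Require Import complex.
Set Implicit Arguments. Unset Strict Implicit. Unset Printing Implicit Defensive.
Import Order.TTheory GRing.Theory Num.Theory.
Local Open Scope ring_scope.
Local Open Scope fset_scope.

Definition csnd (R : realType) (Y : choiceType) (K : Y -> Y -> R) : Prop :=
  forall lam : {fsfun Y -> R[i] for fun => 0},
    lam != [fsfun] ->
    \sum_(y <- finsupp lam) lam y = 0 ->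
    \sum_(x <- finsupp lam) \sum_(y <- finsupp lam)
        lam x * conjc (lam y) * ((K x y)%:C)%C < 0.

(* The wedge X = X1 |_| X2 / (e1 ~ e2), modelled as X1 + (X2 \ {e2}). *)
Definition wedge (X1 X2 : choiceType) (e2 : X2) : choiceType :=
  (X1 + {x : X2 | x != e2})%type.

Definition inj1 (X1 X2 : choiceType) (e2 : X2) (x : X1) : wedge X1 e2 := inl x.

Definition inj2 (X1 X2 : choiceType) (e1 : X1) (e2 : X2) (x : X2) : wedge X1 e2 :=
  match boolP (x != e2) with
  | AltTrue h => inr (exist _ x h)
  | AltFalse _ => inl e1
  end.

Definition wedgeK (R : realType) (X1 X2 : choiceType) (e1 : X1) (e2 : X2)
  (K1 : X1 -> X1 -> R) (K2 : X2 -> X2 -> R) (x y : wedge X1 e2) : R :=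
  match x, y with
  | inl a, inl b => K1 a b
  | inl a, inr b => K1 a e1 + K2 e2 (sval b)
  | inr a, inl b => K2 (sval a) e2 + K1 e1 b
  | inr a, inr b => K2 (sval a) (sval b)
  end.

(* Main.v *)
Require Import Defs.
From HB Require Import structures.
From mathcomp Require Import all_boot all_order all_algebra.
From mathcomp Require Import finmap.
From mathcomp Require Import reals.
From mathcomp Require Import complex.
Import Order.TTheory GRing.Theory Num.Theory.
Local Open Scope ring_scope.

Section Aux.
Variable R : realType.
Local Notation C := R[i].
Local Open Scope fset_scope.

Definition Qf (Y : choiceType) (K : Y -> Y -> R) (lam : {fsfun Y -> C for fun => 0}) :=
  \sum_(x <- finsupp lam) \sum_(y <- finsupp lam)
        lam x * conjc (lam y) * ((K x y)%:C)%C.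

Arguments Qf {Y}.

Lemma sum_eq1 (Y : choiceType) (lam : {fsfun Y -> C for fun => 0}) (x : Y) (P : pred Y) :
  (forall y, P y = (y == x)) -> \sum_(y <- finsupp lam | P y) lam y = lam x.
Proof.
move=> HP; rewrite (eq_bigl (fun y => y == x)) //.
case: (boolP (x \in finsupp lam)) => hx.
  by rewrite (@fbig_pred1_inj _ _ _ _ _ _ id) //.
rewrite fsfun_dflt // big1_fset // => i hi /eqP ei.
by move: hx; rewrite -ei hi.
Qed.

Lemma Q_incl (Y : choiceType) (Ker : Y -> Y -> R) (lam : {fsfun Y -> C for fun => 0}) (B : {fset Y}) :
  finsupp lam `<=` B ->
  Qf Ker lam = \sum_(x <- B) \sum_(y <- B) lam x * conjc (lam y) * ((Ker x y)%:C)%C.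
Proof.
move=> sub; rewrite /Qf (big_fset_incl _ sub); last first.
  move=> x _ hx; rewrite big1 // => y _; by rewrite fsfun_dflt // !mul0r.
apply: eq_bigr => x _; rewrite (big_fset_incl _ sub) // => y _ hy.
by rewrite (fsfun_dflt hy) rmorph0 mulr0 mul0r.
Qed.

Variables (Y Z : choiceType) (f : Y -> Z).

Lemma fiber (A : {fset Y}) (g : Y -> C) (G : Z -> C) :
  \sum_(z <- f @` A) (\sum_(x <- A | f x == z) g x) * G z =
  \sum_(x <- A) g x * G (f x).
Proof.
rewrite (eq_bigr (fun z => \sum_(x <- A) (if f x == z then g x * G z else 0))); last first.
  by move=> z _; rewrite mulr_suml big_mkcond; apply: eq_bigr => x _; case: ifP; rewrite ?mul0r.
rewrite exchange_big /= big_seq [RHS]big_seq; apply: eq_bigr => x hx.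
rewrite (eq_bigr (fun z => if z == f x then g x * G (f x) else 0)); last first.
  by move=> z _; rewrite eq_sym; case: eqP => // ->.
rewrite -big_mkcond -big_filter.
rewrite (@filter_pred1_uniq _ _ (f x)) ?fset_uniq ?in_imfset //.
by rewrite big_seq1.
Qed.

Lemma push (lam : {fsfun Y -> C for fun => 0}) :
  exists mu : {fsfun Z -> C for fun => 0},
    (forall z, mu z = \sum_(y <- finsupp lam | f y == z) lam y) /\
    finsupp mu `<=` f @` finsupp lam.
Proof.
exists [fsfun z in (f @` finsupp lam) => \sum_(y <- finsupp lam | f y == z) lam y | 0].
split.
  move=> z; rewrite fsfunE; case: ifP => // hz.
  rewrite big1_fset // => y hy /eqP e; move: hz; by rewrite -e in_imfset.
apply/fsubsetP => z; rewrite mem_finsupp fsfunE; case: ifP => //; by rewrite eqxx.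
Qed.

Lemma push_sum (lam : {fsfun Y -> C for fun => 0}) (mu : {fsfun Z -> C for fun => 0}) :
  (forall z, mu z = \sum_(y <- finsupp lam | f y == z) lam y) ->
  finsupp mu `<=` f @` finsupp lam ->
  \sum_(z <- finsupp mu) mu z = \sum_(y <- finsupp lam) lam y.
Proof.
move=> Hmu sub; rewrite (big_fset_incl _ sub); last first.
  by move=> z _ hz; rewrite fsfun_dflt.
have := fiber (finsupp lam) lam (fun _ => 1).
rewrite (eq_bigr _ (fun z _ => mulr1 _)) [RHS](eq_bigr _ (fun z _ => mulr1 _)).
move=> <-; by apply: eq_bigr => z _; rewrite Hmu.
Qed.

Lemma push_Q (K : Z -> Z -> R) (lam : {fsfun Y -> C for fun => 0}) (mu : {fsfun Z -> C for fun => 0}) :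
  (forall z, mu z = \sum_(y <- finsupp lam | f y == z) lam y) ->
  finsupp mu `<=` f @` finsupp lam ->
  Qf (fun a b => K (f a) (f b)) lam = Qf K mu.
Proof.
move=> Hmu sub; rewrite (@Q_incl _ K _ _ sub) /Qf.
apply: esym.
under eq_bigr => z _ do (under eq_bigr => w _ do rewrite -mulrA; rewrite -mulr_sumr).
under eq_bigr => z _.
  have -> : \sum_(w <- f @` finsupp lam) conjc (mu w) * (K z w)%:C%C =
            \sum_(y <- finsupp lam) conjc (lam y) * (K z (f y))%:C%C.
    rewrite -(fiber _ (fun y => conjc (lam y)) (fun w => (K z w)%:C%C)).
    by apply: eq_bigr => w _; rewrite Hmu rmorph_sum.
  over.
under eq_bigr => z _ do rewrite Hmu.
rewrite (fiber _ lam (fun z => \sum_(y <- finsupp lam) conjc (lam y) * (K z (f y))%:C%C)).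
apply: eq_bigr => x _; rewrite mulr_sumr; apply: eq_bigr => y _; by rewrite mulrA.
Qed.

Lemma Q0 (W : choiceType) (K : W -> W -> R) : Qf K [fsfun] = 0.
Proof. by rewrite /Qf finsupp0 big_seq_fset0. Qed.

Lemma Q_le0 (W : choiceType) (K : W -> W -> R) (mu : {fsfun W -> C for fun => 0}) :
  csnd K -> \sum_(y <- finsupp mu) mu y = 0 -> Qf K mu <= 0.
Proof.
move=> HK hs; case: (eqVneq mu [fsfun]) => [->|hne]; first by rewrite Q0.
by apply/ltW/HK.
Qed.

End Aux.
Arguments Qf {R Y}.
Arguments push {R Y Z}.
Arguments push_Q {R Y Z f} K {lam mu}.
Arguments push_sum {R Y Z f lam mu}.
Arguments sum_eq1 {R Y}.
Arguments Q_le0 {R W K mu}.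

Lemma inj2_ne (X1 X2 : choiceType) (e1 : X1) (e2 : X2) (y : X2) (h : y != e2) :
  @inj2 X1 X2 e1 e2 y = inr (exist _ y h).
Proof.
rewrite /inj2.
suff H : forall c (a : alt_spec (y != e2) (y != e2) c),
  (match a with AltTrue h' => inr (exist (fun x => x != e2) y h') | AltFalse _ => inl e1 end
   : wedge X1 e2) = inr (exist _ y h).
  exact: H.
move=> c [h'|h'].
  by congr inr; apply: val_inj.
by rewrite h in h'.
Qed.

Lemma inj2_e (X1 X2 : choiceType) (e1 : X1) (e2 : X2) :
  @inj2 X1 X2 e1 e2 e2 = inl e1.
Proof.
rewrite /inj2.
suff H : forall c (a : alt_spec (e2 != e2) (e2 != e2) c),
  (match a with AltTrue h' => inr (exist (fun x => x != e2) e2 h') | AltFalse _ => inl e1 end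
   : wedge X1 e2) = inl e1.
  exact: H.
by move=> c [h'|h'] //; exfalso; move: (h'); rewrite eqxx.
Qed.

Theorem mainTheorem6 (R : realType) (X1 X2 : choiceType) (e1 : X1) (e2 : X2)
  (K1 : X1 -> X1 -> R) (K2 : X2 -> X2 -> R)
  (K1sym : forall x y, K1 x y = K1 y x) (K1ge0 : forall x y, 0 <= K1 x y)
  (K1diag : forall x, K1 x x = 0) (K1csnd : csnd K1)
  (K2sym : forall x y, K2 x y = K2 y x) (K2ge0 : forall x y, 0 <= K2 x y)
  (K2diag : forall x, K2 x x = 0) (K2csnd : csnd K2) :
  let K := wedgeK e1 K1 K2 in
  let i1 := @inj1 X1 X2 e2 in
  let i2 := @inj2 X1 X2 e1 e2 in
  (* K is well defined: it satisfies all four defining clauses on X1, X2 *)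
  [/\ i1 e1 = i2 e2,
      (forall x y : X1, K (i1 x) (i1 y) = K1 x y),
      (forall (x : X1) (y : X2), K (i1 x) (i2 y) = K1 x e1 + K2 e2 y),
      (forall (x : X2) (y : X1), K (i2 x) (i1 y) = K2 x e2 + K1 e1 y)
    & (forall x y : X2, K (i2 x) (i2 y) = K2 x y)] /\
  [/\ (forall x y, K x y = K y x), (forall x y, 0 <= K x y),
      (forall x, K x x = 0) & csnd K].
Proof.
move=> K i1 i2.
have i2E : forall y : X2, (i2 y = inl e1 /\ y = e2) \/ exists b : {x : X2 | x != e2}, sval b = y /\ i2 y = inr b.
  move=> y; case: (eqVneq y e2) => [->|h]; first by left; rewrite /i2 inj2_e.
  right; exists (exist _ y h); split => //; exact: inj2_ne.
split; first split.
- by rewrite /i2 inj2_e.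
- by [].
- move=> x y; case: (i2E y) => [[-> ->]|[[yy h] [/= <- ->]]] //=; by rewrite K2diag addr0.
- move=> x y; case: (i2E x) => [[-> ->]|[[yy h] [/= <- ->]]] //=; by rewrite K2diag add0r.
- move=> x y; case: (i2E x) => [[-> ->]|[[yy h] [/= <- ->]]]; case: (i2E y) => [[-> ->]|[[yy' h'] [/= <- ->]]] //=;
    by rewrite ?K2diag ?K1diag ?addr0 ?add0r.
split.
- case=> [a|[a ha]] [b|[b hb]] /=; [exact: K1sym| |by rewrite addrC K1sym K2sym | exact: K2sym].
  by rewrite addrC K1sym K2sym.
- by case=> [a|[a ha]] [b|[b hb]] //=; rewrite ?addr_ge0.
- by case=> [a|[a ha]] /=; [exact: K1diag|exact: K2diag].
pose p1 (x : wedge X1 e2) : X1 := match x with inl a => a | inr _ => e1 end.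
pose p2 (x : wedge X1 e2) : X2 := match x with inl _ => e2 | inr b => sval b end.
have Kdec : forall x y, K x y = K1 (p1 x) (p1 y) + K2 (p2 x) (p2 y).
  by case=> [a|[a ha]] [b|[b hb]] //=; rewrite ?K1diag ?K2diag ?addr0 ?add0r // addrC.
move=> lam hne hs.
have -> : \sum_(x <- finsupp lam) \sum_(y <- finsupp lam)
        lam x * conjc (lam y) * ((K x y)%:C)%C =
        Qf (fun a b => K1 (p1 a) (p1 b)) lam + Qf (fun a b => K2 (p2 a) (p2 b)) lam.
  rewrite /Qf -big_split; apply: eq_bigr => x _; rewrite -big_split; apply: eq_bigr => y _.
  by rewrite Kdec rmorphD mulrDr.
have [mu1 [H1 S1]] := push p1 lam.
have [mu2 [H2 S2]] := push p2 lam.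
rewrite (push_Q _ H1 S1) (push_Q _ H2 S2).
have s1 : \sum_(y <- finsupp mu1) mu1 y = 0 by rewrite (push_sum H1 S1).
have s2 : \sum_(y <- finsupp mu2) mu2 y = 0 by rewrite (push_sum H2 S2).
have le1 := Q_le0 K1csnd s1; have le2 := Q_le0 K2csnd s2.
case: (eqVneq mu1 [fsfun]) => [m1|n1]; last first.
  by have := ltr_leD (K1csnd _ n1 s1) le2; rewrite addr0.
case: (eqVneq mu2 [fsfun]) => [m2|n2]; last first.
  by have := ltr_leD (K2csnd _ n2 s2) le1; rewrite addr0 addrC.
exfalso; move/eqP: hne; apply.
have z2 : forall b, lam (inr b) = 0.
  move=> [b hb]; rewrite -(sum_eq1 lam (inr (exist _ b hb)) (fun y => p2 y == b)).
    by rewrite -H2 m2 fsfun0E.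
  case=> [a|[a ha]] /=.
    by rewrite eq_sym (negbTE hb).
  apply/eqP/eqP => [eab|e]; first by subst b; congr inr; exact: val_inj.
  by move/(congr1 p2): e.
have z1 : forall a, a != e1 -> lam (inl a) = 0.
  move=> a ha; rewrite -(sum_eq1 lam (inl a) (fun y => p1 y == a)).
    by rewrite -H1 m1 fsfun0E.
  case=> [a'|[b hb]] /=.
    by apply/eqP/eqP => [->|[]].
  by rewrite eq_sym (negbTE ha).
have ze : lam (inl e1) = 0.
  apply: (etrans _ hs); rewrite -(sum_eq1 lam (inl e1) (fun y => y == inl e1)) // big_mkcond /=.
  apply: eq_bigr => y _; case: eqP => // /eqP ny.
  case: y ny => [a|b] ny; last by rewrite z2.
  by rewrite z1 //; apply: contra ny => /eqP ->.
apply/fsfunP => x; rewrite fsfun0E.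
case: x => [a|b]; last by rewrite z2.
case: (eqVneq a e1) => [->|]; [exact: ze | exact: z1].
Qed.
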